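(* Martin's axiom for the partial ordering $\mathrm{Fn}(\omega_1,2)$ implies ${\mathrm{stick}}={\mathrm{stick}}'=2^{\aleph_0}$. Further, if $\mathrm{MA}(\mathit{Cohen})$ holds, then also ${\mathrm{stick}}''=2^{\aleph_0}$.
   Context: $\mathrm{Fn}(\kappa,2)$ is the set of functions from a finite subset of $\kappa$ to $2$ ordered by reverse inclusion. Martin's axiom for a partial ordering $P$: for every family of fewer than $2^{\aleph_0}$ dense subsets of $P$ there is a filter on $P$ meeting all of them. $\mathrm{MA}(\mathit{Cohen})$ is Martin's axiom for all partial orderings of the form $\mathrm{Fn}(\kappa,2)$. ${\mathrm{stick}}$ is the least cardinality of $X\subseteq[\omega_1]^{\aleph_0}$ such that every $y\in[\omega_1]^{\aleph_1}$ has a subset in $X$. ${\mathrm{stick}}'$ (resp. ${\mathrm{stick}}''$) is the least cardinal $\kappa\geq\aleph_1$ for which there is $X\subseteq[\kappa]^{\aleph_0}$ with $|X|=\kappa$ such that every $y\in[\kappa]^{\aleph_1}$ (resp. every $y\in[\kappa]^{\kappa}$) has a subset in $X$. *)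

(* Defs.v *)
From Stdlib Require Import List.

Definition injective {A B : Type} (f : A -> B) : Prop :=
  forall x y, f x = f y -> x = y.
Definition surjective {A B : Type} (f : A -> B) : Prop :=
  forall y, exists x, f x = y.

Definition le_card (A B : Type) : Prop := exists f : A -> B, injective f.
Definition eq_card (A B : Type) : Prop :=
  exists f : A -> B, injective f /\ surjective f.
Definition lt_card (A B : Type) : Prop := le_card A B /\ ~ le_card B A.

Definition countable (A : Type) : Prop := exists f : A -> nat, injective f.

Definition continuum : Type := nat -> bool.

Definition subset {K : Type} (A B : K -> Prop) : Prop := forall x, A x -> B x.

Definition is_omega1 {W : Type} (lt : W -> W -> Prop) : Prop :=
  well_founded lt /\
  (forall x y z, lt x y -> lt y z -> lt x z) /\
  (forall x y, lt x y \/ x = y \/ lt y x) /\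
  ~ countable W /\
  (forall x, countable {y : W | lt y x}).

(** * Martin's axiom for a partial ordering (P, le); le q p means q extends p *)
Definition dense {P : Type} (le : P -> P -> Prop) (D : P -> Prop) : Prop :=
  forall p, exists q, le q p /\ D q.

Definition is_filter {P : Type} (le : P -> P -> Prop) (G : P -> Prop) : Prop :=
  (exists p, G p) /\
  (forall p q, G p -> le p q -> G q) /\
  (forall p q, G p -> G q -> exists r, G r /\ le r p /\ le r q).

Definition MA_for {P : Type} (le : P -> P -> Prop) : Prop :=
  forall F : (P -> Prop) -> Prop,
    lt_card {D : P -> Prop | F D} continuum ->
    (forall D, F D -> dense le D) ->
    exists G, is_filter le G /\ forall D, F D -> exists p, G p /\ D p.

Definition Fn (K : Type) : Type :=
  {p : K -> option bool | exists l : list K, forall x, p x <> None -> In x l}.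

(** le_Fn p q : p extends q (p is stronger), i.e. q ⊆ p as graphs. *)
Definition le_Fn {K : Type} (p q : Fn K) : Prop :=
  forall x b, proj1_sig q x = Some b -> proj1_sig p x = Some b.

Definition MA_Cohen : Prop := forall K : Type, MA_for (@le_Fn K).

Definition ctbl_infinite {K : Type} (A : K -> Prop) : Prop :=
  eq_card {x : K | A x} nat.

Definition sticky_for (K L : Type) (X : (K -> Prop) -> Prop) : Prop :=
  (forall A, X A -> ctbl_infinite A) /\
  (forall y : K -> Prop, eq_card {x : K | y x} L ->
     exists A, X A /\ subset A y).

(** stick = 2^aleph_0, with W = omega_1: the least cardinality of a family
    X ⊆ [omega_1]^{aleph_0} such that every y ∈ [omega_1]^{aleph_1} has a
    subset in X equals the continuum, i.e. it is attained at the continuum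
    and no such family is smaller. *)
Definition stick_eq_c (W : Type) : Prop :=
  (exists X, sticky_for W W X /\ eq_card {A | X A} continuum) /\
  (forall X, sticky_for W W X -> le_card continuum {A | X A}).

(** stick' = 2^aleph_0: the continuum is the least cardinal kappa >= aleph_1
    having X ⊆ [kappa]^{aleph_0}, |X| = kappa, with every y ∈ [kappa]^{aleph_1}
    containing a member of X. *)
Definition stick'_prop (W K : Type) : Prop :=
  exists X, sticky_for K W X /\ eq_card {A | X A} K.

Definition stick'_eq_c (W : Type) : Prop :=
  stick'_prop W continuum /\
  (forall K : Type, le_card W K -> lt_card K continuum -> ~ stick'_prop W K).

(** stick'' = 2^aleph_0: same with y ∈ [kappa]^kappa. *)
Definition stick''_prop (W K : Type) : Prop :=
  exists X, sticky_for K K X /\ eq_card {A | X A} K.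

Definition stick''_eq_c (W : Type) : Prop :=
  stick''_prop W continuum /\
  (forall K : Type, le_card W K -> lt_card K continuum -> ~ stick''_prop W K).

(* Main.v *)
Require Import Defs.
From Stdlib Require Import List Lia Cantor Classical ClassicalEpsilon
  FunctionalExtensionality PropExtensionality ProofIrrelevance.

Lemma le_card_trans A B C : le_card A B -> le_card B C -> le_card A C.
Proof.
  intros [f Hf] [g Hg]. exists (fun x => g (f x)). intros x y H. auto.
Qed.

Lemma eq_card_le A B : eq_card A B -> le_card A B.
Proof. intros [f [Hf _]]. now exists f. Qed.

Lemma eq_card_le' A B : eq_card A B -> le_card B A.
Proof.
  intros [f [Hf Hs]].
  exists (fun b => proj1_sig (constructive_indefinite_description _ (Hs b))).
  intros x y H.
  destruct (constructive_indefinite_description _ (Hs x)) as [a Ha].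
  destruct (constructive_indefinite_description _ (Hs y)) as [b Hb].
  simpl in H. subst. reflexivity.
Qed.

Lemma le_card_refl A : le_card A A.
Proof. exists (fun x => x). intros x y H; exact H. Qed.

Section CSB.
Variables (A B : Type) (f : A -> B) (g : B -> A).
Hypotheses (Hf : injective f) (Hg : injective g).
Inductive CC : A -> Prop :=
| CC0 a : (~ exists b, g b = a) -> CC a
| CCS a : CC a -> CC (g (f a)).

Definition ginv (a : A) : B :=
  match excluded_middle_informative (exists b, g b = a) with
  | left H => proj1_sig (constructive_indefinite_description _ H)
  | right _ => f a
  end.

Lemma ginv_spec b : ginv (g b) = b.
Proof.
  unfold ginv. destruct (excluded_middle_informative _) as [H|H].
  - destruct (constructive_indefinite_description _ H) as [b' Hb']. simpl. auto.
  - exfalso; apply H; eauto.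
Qed.

Lemma ginv_spec2 a : ~ CC a -> g (ginv a) = a.
Proof.
  intros Hn. unfold ginv. destruct (excluded_middle_informative _) as [H|H].
  - destruct (constructive_indefinite_description _ H) as [b' Hb']. simpl. auto.
  - exfalso; apply Hn; constructor; auto.
Qed.

Definition hcsb (a : A) : B :=
  match excluded_middle_informative (CC a) with
  | left _ => f a
  | right _ => ginv a
  end.

Lemma csb_bij : injective hcsb /\ surjective hcsb.
Proof.
  split.
  - intros x y. unfold hcsb.
    destruct (excluded_middle_informative (CC x)) as [Cx|Cx];
    destruct (excluded_middle_informative (CC y)) as [Cy|Cy]; intro H.
    + apply Hf; exact H.
    + exfalso. apply Cy. pose proof (ginv_spec2 y Cy) as E. rewrite <- H in E. rewrite <- E. apply CCS; auto.
    + exfalso. apply Cx. pose proof (ginv_spec2 x Cx) as E. rewrite H in E. rewrite <- E. apply CCS; auto.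
    + rewrite <- (ginv_spec2 x Cx), <- (ginv_spec2 y Cy). f_equal; exact H.
  - intros b. destruct (classic (CC (g b))) as [C|C].
    + inversion C as [a Ha Heq | a Ca Heq].
      * exfalso; apply Ha; eauto.
      * apply Hg in Heq. subst b. exists a. unfold hcsb.
        destruct (excluded_middle_informative (CC a)); tauto.
    + exists (g b). unfold hcsb.
      destruct (excluded_middle_informative (CC (g b))); [tauto|].
      apply ginv_spec.
Qed.
End CSB.

Lemma csb A B : le_card A B -> le_card B A -> eq_card A B.
Proof.
  intros [f Hf] [g Hg]. exists (hcsb A B f g). now apply csb_bij.
Qed.

Definition bP (P : Prop) : bool :=
  if excluded_middle_informative P then true else false.
Lemma bP_true P : bP P = true <-> P.
Proof. unfold bP. destruct (excluded_middle_informative P); split; intros; try tauto; discriminate. Qed.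
Lemma bP_false (P : Prop) : ~ P -> bP P = false.
Proof. unfold bP. destruct (excluded_middle_informative P); tauto. Qed.

Section Zorn.
Variables (T : Type) (le : T -> T -> Prop).
Hypotheses (le_refl : forall x, le x x)
  (le_trans : forall x y z, le x y -> le y z -> le x z)
  (le_anti : forall x y, le x y -> le y x -> x = y).
Definition chain (C : T -> Prop) := forall x y, C x -> C y -> le x y \/ le y x.
Definition is_lub (C : T -> Prop) (s : T) :=
  (forall x, C x -> le x s) /\ (forall u, (forall x, C x -> le x u) -> le s u).
Hypothesis lub_ex : forall C, chain C -> exists s, is_lub C s.
Variable f : T -> T.
Hypothesis f_infl : forall x, le x (f x).

Inductive tower : T -> Prop :=
| tw_f x : tower x -> tower (f x)
| tw_sup C s : chain C -> (forall x, C x -> tower x) -> is_lub C s -> tower s.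

Definition extreme c := forall x, tower x -> le x c -> x <> c -> le (f x) c.

Lemma ext_split c : tower c -> extreme c -> forall x, tower x -> le x c \/ le (f c) x.
Proof.
  intros Tc Ec x Tx. induction Tx as [x Tx IH | C s Ch TC IH [Ub Lst]].
  - destruct IH as [H|H].
    + destruct (classic (x = c)) as [E|E].
      * subst. right. apply le_refl.
      * left. apply Ec; auto.
    + right. eapply le_trans; eauto.
  - destruct (classic (exists z, C z /\ le (f c) z)) as [[z [Cz Hz]]|N].
    + right. eapply le_trans; eauto.
    + left. apply Lst. intros z Cz. destruct (IH z Cz) as [H|H]; auto.
      exfalso; eauto.
Qed.

Lemma all_extreme c : tower c -> extreme c.
Proof.
  intro Tc. induction Tc as [c Tc IH | C s Ch TC IH [Ub Lst]].
  - intros x Tx Hle Hne. destruct (ext_split c Tc IH x Tx) as [H|H].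
    + destruct (classic (x = c)) as [E|E].
      * subst. apply le_refl.
      * eapply le_trans; [apply IH; auto| apply f_infl].
    + exfalso. apply Hne. apply le_anti; auto.
  - intros x Tx Hle Hne.
    destruct (classic (forall z, C z -> le (f z) x)) as [A|A].
    + exfalso. apply Hne. apply le_anti; auto. apply Lst. intros z Cz.
      eapply le_trans; [apply f_infl| apply A; auto].
    + apply not_all_ex_not in A. destruct A as [z A].
      apply imply_to_and in A. destruct A as [Cz A].
      destruct (ext_split z (TC z Cz) (IH z Cz) x Tx) as [H|H]; [|tauto].
      destruct (classic (x = z)) as [E|E].
      * subst z. assert (Ts : tower s) by (eapply tw_sup; eauto; split; auto).
        destruct (ext_split x (TC x Cz) (IH x Cz) s Ts) as [H2|H2]; auto.
        exfalso. apply Hne. apply le_anti; auto.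
      * eapply le_trans; [apply (IH z Cz); auto| apply Ub; auto].
Qed.

Lemma tower_chain : chain tower.
Proof.
  intros x c Tx Tc. destruct (ext_split c Tc (all_extreme c Tc) x Tx) as [H|H]; auto.
  right. eapply le_trans; [apply f_infl| exact H].
Qed.

Lemma tower_fix : exists s, f s = s.
Proof.
  destruct (lub_ex tower tower_chain) as [s Hs].
  assert (Ts : tower s) by (eapply tw_sup; eauto; intros; auto; apply tower_chain).
  exists s. apply le_anti; [apply (proj1 Hs); constructor; auto| apply f_infl].
Qed.
End Zorn.

Lemma zorn (T : Type) (le : T -> T -> Prop)
  (le_refl : forall x, le x x)
  (le_trans : forall x y z, le x y -> le y z -> le x z)
  (le_anti : forall x y, le x y -> le y x -> x = y)
  (lub_ex : forall C, chain T le C -> exists s, is_lub T le C s) :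
  exists m, forall x, le m x -> x = m.
Proof.
  apply NNPP. intro N.
  assert (H : forall m, exists x, le m x /\ x <> m).
  { intro m. apply NNPP. intro N2. apply N. exists m. intros x Hx.
    apply NNPP. intro N3. apply N2. eauto. }
  pose (f := fun m => proj1_sig (constructive_indefinite_description _ (H m))).
  assert (Hf : forall m, le m (f m) /\ f m <> m).
  { intro m. unfold f. destruct (constructive_indefinite_description _ (H m)). auto. }
  destruct (tower_fix T le le_refl le_trans le_anti lub_ex f (fun m => proj1 (Hf m))) as [s Hs].
  apply (proj2 (Hf s)). exact Hs.
Qed.

Definition b2n (b : bool) : nat := if b then 1 else 0.

Section Struct.
Variable V : Type.
Definition Inv (R : V -> bool -> V -> Prop) : Prop :=
  (forall x b a a', R x b a -> R x b a' -> a = a') /\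
  (forall x b a x' b', R x b a -> R x' b' a -> x = x' /\ b = b') /\
  (forall x b b' a, R x b a -> exists a', R x b' a') /\
  (forall x b a, R x b a -> exists a', R a false a').
Definition TT := {R | Inv R}.
Definition leT (R R' : TT) := forall x b a, proj1_sig R x b a -> proj1_sig R' x b a.

Lemma leT_anti R R' : leT R R' -> leT R' R -> R = R'.
Proof.
  destruct R as [R HR], R' as [R' HR']; unfold leT; simpl; intros H1 H2.
  assert (E : R = R').
  { apply functional_extensionality; intro x.
    apply functional_extensionality; intro b.
    apply functional_extensionality; intro a.
    apply propositional_extensionality; split; auto. }
  subst. f_equal. apply proof_irrelevance.
Qed.

Lemma leT_lub C : chain TT leT C -> exists s, is_lub TT leT C s.
Proof.
  intro Ch.
  pose (U := fun x b a => exists R, C R /\ proj1_sig R x b a).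
  assert (IU : Inv U).
  { unfold Inv; split; [|split; [|split]].
    - intros x b a a' [R1 [C1 H1]] [R2 [C2 H2]].
      destruct (Ch R1 R2 C1 C2) as [L|L].
      + apply L in H1. apply (proj1 (proj2_sig R2) x b a a'); auto.
      + apply L in H2. apply (proj1 (proj2_sig R1) x b a a'); auto.
    - intros x b a x' b' [R1 [C1 H1]] [R2 [C2 H2]].
      destruct (Ch R1 R2 C1 C2) as [L|L].
      + apply L in H1. apply (proj1 (proj2 (proj2_sig R2)) x b a x' b'); auto.
      + apply L in H2. apply (proj1 (proj2 (proj2_sig R1)) x b a x' b'); auto.
    - intros x b b' a [R1 [C1 H1]].
      destruct (proj1 (proj2 (proj2 (proj2_sig R1))) x b b' a H1) as [a' Ha'].
      exists a', R1; auto.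
    - intros x b a [R1 [C1 H1]].
      destruct (proj2 (proj2 (proj2 (proj2_sig R1))) x b a H1) as [a' Ha'].
      exists a', R1; auto. }
  exists (exist _ U IU). split.
  - intros R CR x b a H. simpl. exists R; auto.
  - intros u Hu x b a [R [CR H]]. apply (Hu R CR); auto.
Qed.

Lemma structure : exists (S : V -> Prop) (j : V -> bool -> V),
  (forall x b, S x -> S (j x b)) /\
  (forall x b x' b', S x -> S x' -> j x b = j x' b' -> x = x' /\ b = b') /\
  ~ (exists e : nat -> V, injective e /\ forall n, ~ S (e n)).
Proof.
  destruct (zorn TT leT (fun _ _ _ _ H => H)
     (fun x y z H1 H2 a b c H => H2 a b c (H1 a b c H)) leT_anti leT_lub) as [m Hm].
  destruct m as [R [Fun [Inj [Dom Rng]]]].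
  pose (S := fun x => exists a, R x false a).
  assert (HS : forall x b, S x -> exists a, R x b a).
  { intros x b [a Ha]. eapply Dom; eauto. }
  pose (j := fun x b => match excluded_middle_informative (exists a, R x b a) with
                        | left H => proj1_sig (constructive_indefinite_description _ H)
                        | right _ => x end).
  assert (Hj : forall x b, S x -> R x b (j x b)).
  { intros x b Sx. unfold j. destruct (excluded_middle_informative _) as [H|H].
    - destruct (constructive_indefinite_description _ H); auto.
    - exfalso; apply H; auto. }
  exists S, j. split; [|split].
  - intros x b Sx. destruct (Rng _ _ _ (Hj x b Sx)) as [a' Ha']. exists a'; auto.
  - intros x b x' b' Sx Sx' E. eapply Inj; [apply (Hj x b Sx)|]. rewrite E. apply Hj; auto.
  - intros [e [He Hn]].
    pose (R' := fun x b a => R x b a \/ exists n, x = e n /\ a = e (2 * n + b2n b)).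
    assert (RS : forall x b a, R x b a -> S x).
    { intros x b a H. destruct (Dom x b false a H) as [a' Ha']. exists a'; auto. }
    assert (RSa : forall x b a, R x b a -> S a).
    { intros x b a H. destruct (Rng x b a H) as [a' Ha']. exists a'; auto. }
    assert (I' : Inv R').
    { unfold Inv; split; [|split; [|split]].
      - intros x b a a' [H1|[n1 [E1 F1]]] [H2|[n2 [E2 F2]]].
        + eauto.
        + subst. exfalso. apply (Hn n2). eauto.
        + subst. exfalso. apply (Hn n1). eauto.
        + subst. apply He in E2. subst. reflexivity.
      - intros x b a x' b' [H1|[n1 [E1 F1]]] [H2|[n2 [E2 F2]]].
        + eapply Inj; eauto.
        + subst. exfalso. eapply Hn. eapply RSa; eauto.
        + subst. exfalso. eapply Hn. eapply RSa; eauto.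
        + subst. apply He in F2. destruct b, b'; simpl in F2; try lia;
          assert (n1 = n2) by lia; subst; auto.
      - intros x b b' a [H1|[n1 [E1 F1]]].
        + destruct (Dom x b b' a H1) as [a' Ha']. exists a'. left; auto.
        + exists (e (2 * n1 + b2n b')). right. eauto.
      - intros x b a [H1|[n1 [E1 F1]]].
        + destruct (Rng x b a H1) as [a' Ha']. exists a'. left; auto.
        + subst. exists (e (2 * (2 * n1 + b2n b) + 0)). right. exists (2 * n1 + b2n b).
          split; auto. }
    assert (L : leT (exist _ R (conj Fun (conj Inj (conj Dom Rng)))) (exist _ R' I')).
    { intros x b a H. simpl. left; auto. }
    apply Hm in L. inversion L as [E].
    apply (Hn 0). exists (e 0).
    assert (R' (e 0) false (e 0)) by (right; exists 0; split; auto).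
    rewrite E in H. exact H.
Qed.
End Struct.

Notation cid := constructive_indefinite_description.

Lemma fchoice (A B : Type) (P : A -> B -> Prop) : (forall a, exists b, P a b) ->
  exists f : A -> B, forall a, P a (f a).
Proof. intro H. exists (fun a => proj1_sig (cid _ (H a))). intro a. exact (proj2_sig (cid _ (H a))). Qed.

Lemma sig_eq {T} {P : T -> Prop} (x y : {t | P t}) : proj1_sig x = proj1_sig y -> x = y.
Proof. destruct x, y; simpl; intros; subst; f_equal; apply proof_irrelevance. Qed.

Lemma ctbl_enum {K} (A : K -> Prop) : ctbl_infinite A ->
  exists e : nat -> K, injective e /\ (forall n, A (e n)) /\ (forall x, A x -> exists n, e n = x).
Proof.
  intros [f [fi fs]].
  exists (fun n => proj1_sig (proj1_sig (cid _ (fs n)))). split; [|split].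
  - intros n m H. destruct (cid _ (fs n)) as [[x Ax] Hx], (cid _ (fs m)) as [[y Ay] Hy].
    simpl in H. subst y. rewrite <- Hx, <- Hy. f_equal. apply sig_eq; reflexivity.
  - intro n. destruct (cid _ (fs n)) as [[x Ax] Hx]. exact Ax.
  - intros x Ax. exists (f (exist _ x Ax)).
    destruct (cid _ (fs _)) as [[z Az] Hz]. simpl. apply fi in Hz. inversion Hz. auto.
Qed.

Lemma eventually_out {K} (e : nat -> K) (He : injective e) (E : list K) :
  exists N, forall n, N <= n -> ~ In (e n) E.
Proof.
  induction E as [|x E IH].
  - exists 0. intros n _ H. exact H.
  - destruct IH as [N HN]. destruct (classic (exists m, e m = x)) as [[m Hm]|Hm].
    + exists (N + S m). intros n Hn [H|H].
      * subst x. apply He in H. lia.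
      * apply (HN n); auto; lia.
    + exists N. intros n Hn [H|H]; [apply Hm; eauto| apply (HN n); auto].
Qed.

Lemma pick_good {K} (e : nat -> K) (He : injective e) (Bad : K -> Prop)
  (HB : ~ exists s : nat -> K, injective s /\ forall n, Bad (s n)) (E : list K) :
  exists n, ~ Bad (e n) /\ ~ In (e n) E.
Proof.
  destruct (eventually_out e He E) as [N HN].
  apply NNPP. intro C. apply HB. exists (fun n => e (N + n)). split.
  - intros a b H. apply He in H. lia.
  - intro n. apply NNPP. intro Hb. apply C. exists (N + n). split; auto. apply HN; lia.
Qed.

Definition upd {V} (p : Fn V) (x : V) (c : bool) : Fn V.
Proof.
  refine (exist _ (fun z => if excluded_middle_informative (z = x) then Some c else proj1_sig p z) _).
  destruct (proj2_sig p) as [l Hl]. exists (x :: l). intros z Hz.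
  destruct (excluded_middle_informative (z = x)); [left; auto| right; auto].
Defined.

Section Kill.
Variables (V K : Type) (e : V -> K) (e_inj : injective e)
  (S : V -> Prop) (j : V -> bool -> V)
  (jS : forall x b, S x -> S (j x b))
  (jinj : forall x b x' b', S x -> S x' -> j x b = j x' b' -> x = x' /\ b = b')
  (Dfin : ~ exists s : nat -> V, injective s /\ forall n, ~ S (s n))
  (MA : MA_for (@le_Fn V)) (X : (K -> Prop) -> Prop)
  (HX : forall A, X A -> ctbl_infinite A)
  (Hle : le_card {A | X A} continuum) (Hnle : ~ le_card continuum {A | X A}).

Definition DA (A : K -> Prop) (p : Fn V) : Prop :=
  exists a, A a /\ forall v, e v = a ->
    (S v /\ forall x b, S x -> j x b = v -> proj1_sig p x = Some (negb b)).

Lemma DA_dense A : ctbl_infinite A -> dense (@le_Fn V) (DA A).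
Proof.
  intros HA p. destruct (ctbl_enum A HA) as [ep [epi [epA _]]].
  destruct (proj2_sig p) as [l Hl].
  pose (Bad := fun k => exists v, e v = k /\ ~ S v).
  assert (HB : ~ exists s : nat -> K, injective s /\ forall n, Bad (s n)).
  { intros [s [si sB]]. apply Dfin.
    destruct (fchoice _ _ _ sB) as [s' Hs'].
    exists s'. split.
    - intros n m H. apply si. rewrite <- (proj1 (Hs' n)), <- (proj1 (Hs' m)), H. auto.
    - intro n. apply (proj2 (Hs' n)). }
  pose (E := flat_map (fun x => e (j x true) :: e (j x false) :: nil) l).
  destruct (pick_good ep epi Bad HB E) as [n [Hn1 Hn2]].
  pose (a := ep n).
  assert (SA : forall v, e v = a -> S v).
  { intros v Hv. apply NNPP. intro N. apply Hn1. exists v. auto. }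
  destruct (classic (exists x b, S x /\ e (j x b) = a)) as [[x [b [Sx Hx]]]|No].
  - assert (Hxl : ~ In x l).
    { intro I. apply Hn2. fold a. rewrite <- Hx. unfold E. apply in_flat_map.
      exists x. split; auto. destruct b; simpl; auto. }
    assert (px : proj1_sig p x = None).
    { destruct (proj1_sig p x) eqn:Q; auto. exfalso. apply Hxl, Hl. rewrite Q. discriminate. }
    exists (upd p x (negb b)). split.
    + intros z c Hz. simpl. destruct (excluded_middle_informative (z = x)); auto.
      subst. rewrite px in Hz. discriminate.
    + exists a. split; [apply epA|]. intros v Hv. split; [apply SA; auto|].
      intros x' b' Sx' Hj. simpl. subst v.
      assert (Ej : j x' b' = j x b) by (apply e_inj; rewrite Hv, Hx; auto).
      destruct (jinj x' b' x b Sx' Sx Ej). subst.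
      destruct (excluded_middle_informative (x = x)); tauto.
  - exists p. split; [intros z c Hz; auto|].
    exists a. split; [apply epA|]. intros v Hv. split; [apply SA; auto|].
    intros x b Sx Hj. exfalso. apply No. exists x, b. subst. auto.
Qed.

Lemma kill : exists y : K -> Prop, eq_card {k | y k} V /\ forall A, X A -> ~ subset A y.
Proof.
  pose (F := fun D => exists A, X A /\ D = DA A).
  assert (LF : lt_card {D | F D} continuum).
  { pose (mF := fun d : {D | F D} =>
       exist X (proj1_sig (cid _ (proj2_sig d))) (proj1 (proj2_sig (cid _ (proj2_sig d))))).
    assert (mFi : injective mF).
    { intros d1 d2 H. unfold mF in H. apply (f_equal (@proj1_sig _ _)) in H. simpl in H.
      destruct (cid _ (proj2_sig d1)) as [A1 [X1 H1]], (cid _ (proj2_sig d2)) as [A2 [X2 H2]].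
      simpl in H. apply sig_eq. congruence. }
    split.
    - eapply le_card_trans; [exists mF; exact mFi| exact Hle].
    - intro C. apply Hnle. eapply le_card_trans; [exact C| exists mF; exact mFi]. }
  assert (DF : forall D, F D -> dense (@le_Fn V) D).
  { intros D [A [XA ->]]. apply DA_dense; auto. }
  destruct (MA F LF DF) as [G [[_ [Gup Gdir]] Gmeet]].
  pose (g := fun v => bP (exists p, G p /\ proj1_sig p v = Some true)).
  assert (gs : forall p v c, G p -> proj1_sig p v = Some c -> g v = c).
  { intros p v c Gp Hp. unfold g. destruct c.
    - apply bP_true. eauto.
    - apply bP_false. intros [p' [Gp' Hp']].
      destruct (Gdir p p' Gp Gp') as [r [Gr [L1 L2]]].
      apply L1 in Hp. apply L2 in Hp'. congruence. }
  pose (phi := fun v => if excluded_middle_informative (S v) then j v (g v) else v).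
  assert (phii : injective phi).
  { intros v w. unfold phi.
    destruct (excluded_middle_informative (S v)) as [Sv|Sv];
    destruct (excluded_middle_informative (S w)) as [Sw|Sw]; intro H.
    - apply (jinj v (g v) w (g w)); auto.
    - exfalso. apply Sw. rewrite <- H. auto.
    - exfalso. apply Sv. rewrite H. auto.
    - auto. }
  exists (fun k => exists v, e (phi v) = k). split.
  - exists (fun k : {k | exists v, e (phi v) = k} =>
        proj1_sig (cid (fun v => e (phi v) = proj1_sig k) (proj2_sig k))). split.
    + intros k1 k2 H. destruct (cid _ (proj2_sig k1)) as [v1 H1], (cid _ (proj2_sig k2)) as [v2 H2].
      simpl in H. subst. apply sig_eq. congruence.
    + intro v. exists (exist _ (e (phi v)) (ex_intro _ v eq_refl)).
      destruct (cid _ _) as [w Hw]. simpl. simpl in Hw. apply e_inj, phii in Hw. auto.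
  - intros A XA Sub.
    destruct (Gmeet (DA A) (ex_intro _ A (conj XA eq_refl))) as [p [Gp [a [Aa Ha]]]].
    destruct (Sub a Aa) as [v' Hv']. unfold phi in Hv'.
    destruct (excluded_middle_informative (S v')) as [Sv|Sv].
    + destruct (Ha _ Hv') as [_ H]. specialize (H v' (g v') Sv eq_refl).
      apply (gs p v' _ Gp) in H. destruct (g v'); discriminate.
    + destruct (Ha _ Hv') as [H _]. auto.
Qed.
End Kill.

Lemma uncountable_nat {T} : ~ countable T -> le_card nat T.
Proof.
  intro U.
  assert (Fr : forall l : list T, exists x, ~ In x l).
  { intro l. apply NNPP. intro N. apply U.
    assert (H : forall x, exists n, nth_error l n = Some x).
    { intro x. apply In_nth_error. apply NNPP. intro N2. apply N. eauto. }
    destruct (fchoice _ _ _ H) as [f Hf]. exists f. intros x y E.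
    pose proof (Hf x) as Hx. pose proof (Hf y) as Hy. rewrite E in Hx. congruence. }
  destruct (fchoice _ _ _ Fr) as [fr Hfr].
  pose (g := fix g n := match n with 0 => nil | S n => fr (g n) :: g n end).
  assert (Hg : forall m n, m < n -> In (fr (g m)) (g n)).
  { intros m n H. induction H; simpl; auto. }
  exists (fun n => fr (g n)). intros m n E.
  destruct (PeanoNat.Nat.lt_trichotomy m n) as [H|[H|H]]; auto; exfalso.
  - apply (Hfr (g n)). rewrite <- E. auto.
  - apply (Hfr (g m)). rewrite E. auto.
Qed.

Lemma img_ctbl {K} (e : nat -> K) : injective e -> ctbl_infinite (fun k => exists n, e n = k).
Proof.
  intro ei.
  exists (fun k : {k | exists n, e n = k} => proj1_sig (cid (fun n => e n = proj1_sig k) (proj2_sig k))).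
  split.
  - intros k1 k2 H. destruct (cid _ (proj2_sig k1)) as [n1 H1], (cid _ (proj2_sig k2)) as [n2 H2].
    simpl in H. subst. apply sig_eq. congruence.
  - intro n. exists (exist _ (e n) (ex_intro _ n eq_refl)).
    destruct (cid _ _) as [m Hm]. simpl in *. auto.
Qed.

Lemma sticky_all {K L} : le_card nat L -> sticky_for K L (fun A => ctbl_infinite A).
Proof.
  intro NL. split; [auto|]. intros y Hy.
  destruct (le_card_trans _ _ _ NL (eq_card_le' _ _ Hy)) as [h hi].
  exists (fun k => exists n, proj1_sig (h n) = k). split.
  - apply img_ctbl. intros n m E. apply hi, sig_eq, E.
  - intros k [n <-]. exact (proj2_sig (h n)).
Qed.

Lemma ctbl_subsets_le {T} : le_card T continuum ->
  le_card {A : T -> Prop | ctbl_infinite A} continuum.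
Proof.
  intros [i ii].
  pose (en := fun A : {A : T -> Prop | ctbl_infinite A} => proj1_sig (cid _ (ctbl_enum _ (proj2_sig A)))).
  assert (enS : forall A x, proj1_sig A x <-> exists n, en A n = x).
  { intros A x. unfold en. destruct (cid _ _) as [e [eI [eA eS]]]. simpl. split.
    - apply eS.
    - intros [n <-]. apply eA. }
  exists (fun A k => i (en A (fst (Cantor.of_nat k))) (snd (Cantor.of_nat k))).
  intros A B E.
  assert (Hn : forall n, en A n = en B n).
  { intro n. apply ii. apply functional_extensionality. intro m.
    pose proof (f_equal (fun f => f (Cantor.to_nat (n, m))) E) as Q. cbv beta in Q.
    rewrite Cantor.cancel_of_to in Q. exact Q. }
  apply sig_eq. apply functional_extensionality. intro x. apply propositional_extensionality.
  rewrite (enS A x), (enS B x). split; intros [n Hn']; exists n; rewrite <- Hn'; auto.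
Qed.

Lemma ctbl_subsets_ge {T} : le_card nat T ->
  le_card continuum {A : T -> Prop | ctbl_infinite A}.
Proof.
  intros [e ei].
  assert (ri : forall r : continuum, injective (fun n => e (2 * n + b2n (r n)))).
  { intros r n m H. apply ei in H. destruct (r n), (r m); simpl in H; lia. }
  exists (fun r => exist _ _ (img_ctbl _ (ri r))).
  intros r s E. apply functional_extensionality. intro n.
  apply (f_equal (fun A => proj1_sig A (e (2 * n + b2n (r n))))) in E.
  cbn [proj1_sig] in E.
  assert (H : exists m, e (2 * m + b2n (s m)) = e (2 * n + b2n (r n))).
  { rewrite <- E. eauto. }
  destruct H as [m Hm]. apply ei in Hm.
  destruct (r n), (s m) eqn:Q; simpl in Hm; try lia;
  assert (m = n) by lia; subst; congruence.
Qed.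

Section Om.
Variables (W : Type) (lt : W -> W -> Prop) (Hw : is_omega1 lt).

Lemma lt_irrefl x : ~ lt x x.
Proof.
  destruct Hw as [wf _]. induction (wf x) as [x _ IH]. intro H. apply (IH x H H).
Qed.

Lemma W_le_c : le_card W continuum.
Proof.
  destruct Hw as [wf [tr [tri [unc segc]]]].
  assert (HF : forall a, exists F : W -> nat, forall y z, lt y a -> lt z a -> F y = F z -> y = z).
  { intro a. destruct (segc a) as [f fi].
    exists (fun y => match excluded_middle_informative (lt y a) with
                     | left H => f (exist _ y H) | right _ => 0 end).
    intros y z Hy Hz. destruct (excluded_middle_informative (lt y a)); [|tauto].
    destruct (excluded_middle_informative (lt z a)); [|tauto].
    intro E. apply fi in E. inversion E. auto. }
  destruct (fchoice _ _ _ HF) as [F Fi].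
  pose (R := fun a m n => exists y z, lt y a /\ lt z a /\ (lt y z \/ y = z) /\ F a y = m /\ F a z = n).
  exists (fun a k => bP (R a (fst (Cantor.of_nat k)) (snd (Cantor.of_nat k)))).
  assert (Key : forall a b, lt a b -> (forall m n, R a m n <-> R b m n) -> False).
  { intros a b Hab HR.
    assert (Hh : forall y, exists y', lt y b -> lt y' a /\ F a y' = F b y).
    { intro y. destruct (classic (lt y b)) as [Hy|Hy]; [|exists a; tauto].
      assert (R b (F b y) (F b y)) by (exists y, y; tauto).
      apply HR in H. destruct H as [y' [z' [H1 [H2 [H3 [H4 H5]]]]]]. exists y'. auto. }
    destruct (fchoice _ _ _ Hh) as [h hs].
    assert (mono : forall y z, lt y b -> lt z b -> lt y z -> lt (h y) (h z)).
    { intros y z Hy Hz Hyz.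
      assert (R b (F b y) (F b z)) by (exists y, z; tauto).
      apply HR in H. destruct H as [y' [z' [H1 [H2 [H3 [H4 H5]]]]]].
      destruct (hs y Hy) as [hy1 hy2], (hs z Hz) as [hz1 hz2].
      assert (y' = h y) by (apply (Fi a); congruence).
      assert (z' = h z) by (apply (Fi a); congruence). subst y' z'.
      destruct H3 as [H3|H3]; auto. exfalso.
      assert (y = z) by (apply (Fi b); congruence). subst. eapply lt_irrefl; eauto. }
    assert (NP : forall x, ~ (lt x b /\ lt (h x) x)).
    { intro x. induction (wf x) as [x _ IH]. intros [Hx Hhx].
      apply (IH (h x) Hhx). destruct (hs x Hx) as [h1 h2].
      assert (lt (h x) b) by eauto.
      split; auto. }
    apply (NP a). split; auto. apply (hs a Hab). }
  intros a b E.
  assert (HR : forall m n, R a m n <-> R b m n).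
  { intros m n. pose proof (f_equal (fun f => f (Cantor.to_nat (m, n))) E) as Q. cbv beta in Q.
    rewrite Cantor.cancel_of_to in Q. simpl in Q.
    split; intro H; apply bP_true; [rewrite <- Q| rewrite Q]; apply bP_true; auto. }
  destruct (tri a b) as [H|[H|H]]; auto; exfalso.
  - apply (Key a b H HR).
  - apply (Key b a H). intros; split; apply HR.
Qed.
End Om.

Lemma nat_le_c : le_card nat continuum.
Proof.
  exists (fun n k => Nat.eqb n k). intros m n E.
  pose proof (f_equal (fun f => f n) E) as Q. cbv beta in Q.
  rewrite PeanoNat.Nat.eqb_refl in Q. apply PeanoNat.Nat.eqb_eq; auto.
Qed.

Lemma sub_le {K} (X : (K -> Prop) -> Prop) : (forall A, X A -> ctbl_infinite A) ->
  le_card {A | X A} {A : K -> Prop | ctbl_infinite A}.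
Proof.
  intro HX. exists (fun A => exist _ (proj1_sig A) (HX _ (proj2_sig A))).
  intros A B E. apply sig_eq. apply (f_equal (@proj1_sig _ _)) in E. exact E.
Qed.

Theorem fact1p3 (W : Type) (ltW : W -> W -> Prop) (Hw1 : is_omega1 ltW) :
  (MA_for (@le_Fn W) -> stick_eq_c W /\ stick'_eq_c W) /\
  (MA_Cohen -> stick''_eq_c W).
Proof.
  assert (NW : le_card nat W) by (apply uncountable_nat; apply Hw1).
  assert (Wc : le_card W continuum) by (eapply W_le_c; eauto).
  pose proof nat_le_c as Nc.
  assert (Cc : eq_card {A : continuum -> Prop | ctbl_infinite A} continuum).
  { apply csb; [apply ctbl_subsets_le, le_card_refl| apply ctbl_subsets_ge, Nc]. }
  split.
  - intro MA. split; split.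
    + exists (fun A => ctbl_infinite A). split; [apply sticky_all; auto|].
      apply csb; [apply ctbl_subsets_le; auto| apply ctbl_subsets_ge; auto].
    + intros X [HX Hst]. apply NNPP; intro Nle.
      destruct (structure W) as [S [j [jS [jinj Dfin]]]].
      assert (Hle : le_card {A | X A} continuum).
      { eapply le_card_trans; [apply sub_le; auto| apply ctbl_subsets_le; auto]. }
      destruct (kill W W (fun x => x) (fun x y H => H) S j jS jinj Dfin MA X HX Hle Nle)
        as [y [Hy Hn]].
      destruct (Hst y Hy) as [A [XA SA]]. apply (Hn A XA SA).
    + exists (fun A => ctbl_infinite A). split; [apply sticky_all; auto| exact Cc].
    + intros K [e ei] Klt [X [[HX Hst] XK]].
      destruct (structure W) as [S [j [jS [jinj Dfin]]]].
      assert (Hle : le_card {A | X A} continuum).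
      { eapply le_card_trans; [apply eq_card_le, XK| apply Klt]. }
      assert (Hnle : ~ le_card continuum {A | X A}).
      { intro C. apply (proj2 Klt). eapply le_card_trans; [exact C| apply eq_card_le, XK]. }
      destruct (kill W K e ei S j jS jinj Dfin MA X HX Hle Hnle) as [y [Hy Hn]].
      destruct (Hst y Hy) as [A [XA SA]]. apply (Hn A XA SA).
  - intro MAC. split.
    + exists (fun A => ctbl_infinite A). split; [apply sticky_all; auto| exact Cc].
    + intros K WK Klt [X [[HX Hst] XK]].
      destruct (structure K) as [S [j [jS [jinj Dfin]]]].
      assert (Hle : le_card {A | X A} continuum).
      { eapply le_card_trans; [apply eq_card_le, XK| apply Klt]. }
      assert (Hnle : ~ le_card continuum {A | X A}).
      { intro C. apply (proj2 Klt). eapply le_card_trans; [exact C| apply eq_card_le, XK]. }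
      destruct (kill K K (fun x => x) (fun x y H => H) S j jS jinj Dfin (MAC K) X HX Hle Hnle)
        as [y [Hy Hn]].
      destruct (Hst y Hy) as [A [XA SA]]. apply (Hn A XA SA).
Qed.
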